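(* Assume $2\prod_{i=1}^{n-1}(1+q^i)\neq0$ in $K$, and let $\lambda\in\mathcal P_n$ with $\lambda=\widehat\lambda$. Then there is an $\mathcal H(D_{n-1})$-module isomorphism $$\mathrm{soc}\bigl(D_+^{\lambda}\!\downarrow_{\mathcal H(D_{n-1})}\bigr)\cong\mathrm{soc}\bigl(D_-^{\lambda}\!\downarrow_{\mathcal H(D_{n-1})}\bigr).$$
   Context: Let $K$ be a field, $q\in K^\times$, and assume $2\prod_{i=1}^{n-1}(1+q^i)\neq0$ in $K$. $\mathcal H(B_m)$ is the $K$-algebra with generators $T_0,\dots,T_{m-1}$ and relations $T_0^2=1$; $(T_i+1)(T_i-q)=0$ for $1\le i\le m-1$; $T_0T_1T_0T_1=T_1T_0T_1T_0$; $T_iT_{i+1}T_i=T_{i+1}T_iT_{i+1}$ for $1\le i\le m-2$; $T_iT_j=T_jT_i$ for $|i-j|>1$. $\mathcal H(D_m)$ is its subalgebra generated by $T_0T_1T_0,T_1,\dots,T_{m-1}$; $\mathcal H(D_{n-1})\subset\mathcal H(D_n)$ via generators of index $\le n-2$. For a bipartition $\lambda$, $\tilde D^\lambda$ is the simple head of the Dipper–James–Mathas Specht module, $\mathcal P_m=\{\lambda:\tilde D^\lambda\ne0\}$, and $\widehat\lambda=(\lambda^{(2)},\lambda^{(1)})$. Under the hypothesis $\mathcal H(D_n)$ is split and, for $\lambda\in\mathcal P_n$ with $\lambda=\widehat\lambda$, $\tilde D^\lambda\!\downarrow_{\mathcal H(D_n)}=D_+^\lambda\oplus D_-^\lambda$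 with $D_+^\lambda,D_-^\lambda$ non-isomorphic irreducible $\mathcal H(D_n)$-modules. *)

(* Defs.v *)
From HB Require Import structures.
From mathcomp Require Import all_boot all_order all_algebra.
Set Implicit Arguments. Unset Strict Implicit. Unset Printing Implicit Defensive.
Import GRing.Theory.
Local Open Scope ring_scope.

(* A (finite-dimensional, right) module over a Hecke algebra is represented by
   matrices acting on row vectors K^d; T i is the matrix of the generator T_i.
   Only the indices i < n are relevant. *)

Definition HB_rel (K : fieldType) (n d : nat) (q : K) (T : nat -> 'M[K]_d)
  : Prop :=
  [/\ (0 < n)%N -> T 0%N *m T 0%N = 1%:M,
      forall i, (1 <= i < n)%N -> (T i + 1%:M) *m (T i - q%:M) = 0,
      (1 < n)%N -> T 0%N *m T 1%N *m T 0%N *m T 1%N = T 1%N *m T 0%N *m T 1%N *m T 0%N,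
      forall i, (1 <= i)%N -> (i.+1 < n)%N ->
        T i *m T i.+1 *m T i = T i.+1 *m T i *m T i.+1 &
      forall i j, (i < n)%N -> (j < n)%N -> ((i.+1 < j) || (j.+1 < i))%N ->
        T i *m T j = T j *m T i].

Definition genB (K : fieldType) (d : nat) (n : nat) (T : nat -> 'M[K]_d)
  : seq 'M[K]_d := [seq T i | i <- iota 0 n].

(* generators of H(D_m) inside H(B_n) (m <= n): T_0 T_1 T_0 (when m >= 2) and
   T_1, ..., T_{m-1}.  In particular H(D_{n-1}) uses the generators of index
   <= n-2. *)
Definition genD (K : fieldType) (d : nat) (m : nat) (T : nat -> 'M[K]_d)
  : seq 'M[K]_d :=
  (if (1 < m)%N then [:: T 0%N *m T 1%N *m T 0%N] else [::])
  ++ [seq T i | i <- iota 1 m.-1].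

Definition stable (K : fieldType) (d : nat) (gs : seq 'M[K]_d) (U : 'M[K]_d)
  : bool := all (fun A => (U *m A <= U)%MS) gs.

Definition simple_sub (K : fieldType) (d : nat) (gs : seq 'M[K]_d) (U : 'M[K]_d)
  : Prop :=
  [/\ U != 0, stable gs U &
      forall V : 'M[K]_d, stable gs V -> (V <= U)%MS -> V = 0 \/ (U <= V)%MS].

Definition mod_iso (K : fieldType) (d : nat) (gs : seq 'M[K]_d) (U V : 'M[K]_d)
  : Prop :=
  exists f : 'M[K]_d,
    [/\ \rank (U *m f) = \rank U, (U *m f == V)%MS &
        all (fun A => U *m A *m f == U *m f *m A) gs].

Definition is_socle (K : fieldType) (d : nat) (gs : seq 'M[K]_d) (U S : 'M[K]_d)
  : Prop :=
  [/\ stable gs S, (S <= U)%MS,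
      (forall W : 'M[K]_d, simple_sub gs W -> (W <= U)%MS -> (W <= S)%MS) &
      exists k (Ws : 'I_k -> 'M[K]_d),
        (forall i, simple_sub gs (Ws i)) /\ (S == \sum_(i < k) Ws i)%MS].

(* Main.v *)
Require Import Defs.
From HB Require Import structures.
From mathcomp Require Import all_boot all_order all_algebra zify.
From Stdlib Require Import Classical.
Set Implicit Arguments. Unset Strict Implicit. Unset Printing Implicit Defensive.
Import GRing.Theory.
Local Open Scope ring_scope.

Section Gen.
Variables (K : fieldType) (d : nat).
Implicit Types (gs : seq 'M[K]_d) (U V W S f : 'M[K]_d).

Lemma stable0 gs : stable gs (0 : 'M[K]_d).
Proof. by apply/allP => A _; rewrite mul0mx sub0mx. Qed.

Lemma stableD gs U V : stable gs U -> stable gs V -> stable gs (U + V)%MS.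
Proof.
move=> /allP sU /allP sV; apply/allP => A hA.
by rewrite addsmxMr addsmxS ?sU ?sV.
Qed.

Lemma stableI gs U V : stable gs U -> stable gs V -> stable gs (U :&: V)%MS.
Proof.
move=> /allP sU /allP sV; apply/allP => A hA.
rewrite sub_capmx; apply/andP; split.
  by apply: submx_trans (sU A hA); apply: submxMr; apply: capmxSl.
by apply: submx_trans (sV A hA); apply: submxMr; apply: capmxSr.
Qed.

Definition commgs gs f := forall A, A \in gs -> A *m f = f *m A.

Lemma commgs_inv gs f : f \in unitmx -> commgs gs f -> commgs gs (invmx f).
Proof.
move=> uf c A hA.
rewrite -[RHS](mulmxK uf) -(mulmxA (invmx f)) c //.
by rewrite !mulmxA mulVmx // mul1mx.
Qed.

Lemma stableM gs f V : commgs gs f -> stable gs V -> stable gs (V *m f).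
Proof.
move=> c /allP sV; apply/allP => A hA.
by rewrite -mulmxA -c // mulmxA submxMr ?sV.
Qed.

Lemma simpleM gs f W : f \in unitmx -> commgs gs f ->
  simple_sub gs W -> simple_sub gs (W *m f).
Proof.
move=> uf c [nz sW hW]; split.
- by apply: contra nz => /eqP h; rewrite -(mulmxK uf W) h mul0mx.
- exact: stableM.
move=> V sV VW.
have := hW (V *m invmx f) (stableM (commgs_inv uf c) sV).
rewrite -(mulmxK uf W) submxMr // => /(_ isT) [h|h].
  by left; rewrite -(mulmxKV uf V) h mul0mx.
by right; rewrite -(mulmxKV uf V) submxMr.
Qed.

Lemma socleM gs f U S : f \in unitmx -> commgs gs f ->
  is_socle gs U S -> is_socle gs (U *m f) (S *m f).
Proof.
move=> uf c [sS SU hS [k [Ws [hWs eS]]]]; split.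
- exact: stableM.
- exact: submxMr.
- move=> W simW WU.
  have := hS (W *m invmx f) (simpleM (etrans (unitmx_inv f) uf) (commgs_inv uf c) simW).
  rewrite -(mulmxK uf U) submxMr // => /(_ isT) h.
  by rewrite -(mulmxKV uf W) submxMr.
exists k, (fun i => Ws i *m f); split.
  by move=> i; apply: simpleM.
apply/eqmxP; apply: eqmx_trans (sumsmxMr _ _ _); apply: eqmxMr.
exact/eqmxP.
Qed.

Lemma socle_eq gs U U' S : (U == U')%MS -> is_socle gs U S -> is_socle gs U' S.
Proof.
move=> /eqmxP e [sS SU hS h]; split => //.
- by rewrite -e.
- by move=> W sW; rewrite -e; apply: hS.
Qed.

Lemma isoM gs f S : f \in unitmx -> commgs gs f -> mod_iso gs S (S *m f).
Proof.
move=> uf c; exists f; split.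
- by rewrite mxrankMfree // row_free_unit.
- by apply/andP; split.
apply/allP => A hA; by rewrite -!mulmxA c.
Qed.

End Gen.

Section Soc.
Variables (K : fieldType) (d : nat).
Implicit Types (gs : seq 'M[K]_d) (U V W S f : 'M[K]_d).

Lemma socle_exists gs U : exists S, is_socle gs U S.
Proof.
pose P S := [/\ stable gs S, (S <= U)%MS & exists k (Ws : 'I_k -> 'M[K]_d),
  (forall i, simple_sub gs (Ws i)) /\ (S == \sum_(i < k) Ws i)%MS].
suff H : forall m S, (d - \rank S <= m)%N -> P S -> exists S', is_socle gs U S'.
  apply: (H d 0); first by rewrite leq_subr.
  split; [exact: stable0 | exact: sub0mx |].
  exists 0%N, (fun _ => 0); split; first by case.
  by rewrite big_ord0; apply/andP.
elim=> [|m IH] S hm [sS SU [k [Ws [hWs eS]]]].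
  case: (classic (exists W, [/\ simple_sub gs W, (W <= U)%MS & ~~ (W <= S)%MS]))
    => [[W [simW WU nWS]]|nex].
    have lt : (\rank S < \rank (S + W)%MS)%N.
      rewrite ltn_neqAle; have := mxrank_leqif_sup (addsmxSl S W) => -[-> ->].
      by rewrite andbT; apply: contra nWS; apply: submx_trans; apply: addsmxSr.
    have h2 := rank_leq_col (S + W)%MS; move: hm; rewrite leqn0 subn_eq0 => hm.
    by have := leq_trans lt h2; rewrite ltnNge hm.
  exists S; split => //; last by exists k, Ws.
  move=> W simW WU; case: (boolP (W <= S)%MS) => // nWS.
  by case: nex; exists W.
case: (classic (exists W, [/\ simple_sub gs W, (W <= U)%MS & ~~ (W <= S)%MS]))
  => [[W [simW WU nWS]]|nex]; last first.
  exists S; split => //; last by exists k, Ws.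
  move=> W simW WU; case: (boolP (W <= S)%MS) => // nWS.
  by case: nex; exists W.
apply: (IH (S + W)%MS).
  have lt : (\rank S < \rank (S + W)%MS)%N.
    rewrite ltn_neqAle; have := mxrank_leqif_sup (addsmxSl S W) => -[-> ->].
    by rewrite andbT; apply: contra nWS; apply: submx_trans; apply: addsmxSr.
  have h2 := rank_leq_col (S + W)%MS.
  rewrite -ltnS; apply: leq_trans hm.
  by apply: ltn_sub2l => //; apply: leq_trans lt h2.
split; first by apply: stableD => //; case: simW.
  by rewrite addsmx_sub SU.
exists k.+1, (fun i : 'I_k.+1 => if unlift ord_max i is Some j then Ws j else W).
split.
  by move=> i; case: (unlift ord_max i).
rewrite big_ord_recr /= unlift_none.
have -> : (\sum_(i < k) (if unlift ord_max (widen_ord (leqnSn k) i) is Some j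
           then Ws j else W))%MS = (\sum_(i < k) Ws i)%MS.
  apply: eq_bigr => i _.
  have -> : widen_ord (leqnSn k) i = lift ord_max i by apply: val_inj; rewrite /= /bump leqNgt ltn_ord.
  by rewrite liftK.
by apply/eqmxP; apply: adds_eqmx => //; apply/eqmxP.
Qed.
End Soc.

Section Triv.
Variables (K : fieldType) (d : nat).

Lemma simple_nil_row (P : 'M[K]_d) : simple_sub [::] P ->
  (P == nz_row P)%MS /\ row_free (nz_row P).
Proof.
move=> [nz _ hP].
have d0 : (0 < d)%N.
  by move: P nz {hP}; case: d => // P; rewrite flatmx0 eqxx.
set u := nz_row P.
have unz : u != 0 by rewrite nz_row_eq0.
pose V : 'M[K]_d := \matrix_(i < d) u.
have VP : (V <= P)%MS.
  by apply/row_subP => i; rewrite rowK nz_row_sub.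
have uV : (u <= V)%MS by apply: (eq_row_sub (Ordinal d0)); rewrite rowK.
have Vu : (V <= u)%MS by apply/row_subP => i; rewrite rowK.
have := hP V isT VP; case=> [V0|PV].
  by move: uV; rewrite V0 submx0 (negbTE unz).
have ru : \rank u = 1%N.
  apply/eqP; rewrite eqn_leq rank_leq_row lt0n mxrank_eq0 unz.
  done.
split; last by rewrite /row_free ru.
apply/andP; split; last by rewrite nz_row_sub.
exact: submx_trans PV Vu.
Qed.

Lemma iso_nil (P M : 'M[K]_d) :
  simple_sub [::] P -> simple_sub [::] M -> mod_iso [::] P M.
Proof.
move=> /simple_nil_row [/eqmxP eP fP] /simple_nil_row [/eqmxP eM fM].
exists (pinvmx (nz_row P) *m nz_row M).
have e : (P *m (pinvmx (nz_row P) *m nz_row M) :=: nz_row M)%MS.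
  apply: eqmx_trans (eqmxMr _ eP) _.
  by rewrite mulmxA mulmxVp // mul1mx.
split => //.
- rewrite e eP; move: fP fM; rewrite /row_free => /eqP -> /eqP ->.
  done.
- by apply/eqmxP; apply: eqmx_trans e (eqmx_sym eM).
Qed.
End Triv.

Section L.
Variables (K : fieldType) (q : K) (n d : nat) (T : nat -> 'M[K]_d).
Hypothesis hq : q != 0.
Hypothesis HB : HB_rel n q T.

Lemma T_unit i : (i < n)%N -> T i \in unitmx.
Proof.
case: HB => h0 h1 _ _ _ hi.
case: i hi => [|i] hi.
  by case: (mulmx1_unit (h0 hi)).
have h := h1 i.+1 hi; rewrite mulmxDl mul1mx mulmxBr mul_mx_scalar addrA in h.
apply: (proj1 (@mulmx1_unit _ _ _ (q^-1 *: (T i.+1 - q%:M + 1%:M)) _)).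
rewrite -scalemxAr mulmxDr mulmxBr mul_mx_scalar mulmx1.
have -> : T i.+1 *m T i.+1 - q *: T i.+1 + T i.+1 = q%:M.
  by apply/eqP; rewrite -subr_eq0 h.
by rewrite scale_scalar_mx mulVf.
Qed.

Fixpoint Lm k := if k is k'.+1 then T k'.+1 *m Lm k' *m T k'.+1 else T 0.

Lemma Lm_unit k : (k < n)%N -> Lm k \in unitmx.
Proof.
elim: k => [|k IH] hk /=; first exact: T_unit.
by rewrite !unitmx_mul T_unit // IH // ltnW.
Qed.

Lemma Lm_far k j : (k.+2 <= j)%N -> (j < n)%N -> Lm k *m T j = T j *m Lm k.
Proof.
case: HB => _ _ _ _ hc.
elim: k => [|k IH] hkj hj /=.
  by apply: hc; lia.
have c1 : T k.+1 *m T j = T j *m T k.+1.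
  by apply: hc; lia.
rewrite -mulmxA c1 mulmxA -(mulmxA (T k.+1)) IH //; try lia.
by rewrite !mulmxA c1.
Qed.

Lemma Lm_near k : (k < n)%N -> forall j, (j < k)%N -> Lm k *m T j = T j *m Lm k.
Proof.
case: HB => _ _ h4 hb hc.
elim: k => [//|k IH] hk j hj /=.
rewrite ltnS leq_eqVlt in hj; case/orP: hj => [/eqP ->|hj].
  case: k IH hk => [|k] IH hk /=.
    by rewrite !mulmxA h4.
  have hL := Lm_far (leqnn k.+2) hk.
  have hbr := hb k.+1 isT hk.
  rewrite !mulmxA hbr -(mulmxA _ (T k.+2) (Lm k)) -hL !mulmxA.
  have hbr' : T k.+1 *m (T k.+2 *m T k.+1) = T k.+2 *m (T k.+1 *m T k.+2).
    by rewrite !mulmxA.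
  by rewrite -!mulmxA hbr'.
have c1 : T k.+1 *m T j = T j *m T k.+1 by apply: hc; lia.
rewrite -mulmxA c1 mulmxA -(mulmxA (T k.+1)) IH //; last by lia.
by rewrite !mulmxA c1.
Qed.
End L.

Section Graph.
Variables (K : fieldType) (d : nat) (gs : seq 'M[K]_d) (P M W : 'M[K]_d).
Hypothesis dPM : (P :&: M = 0)%MS.
Hypothesis fullPM : (1%:M <= P + M)%MS.
Hypothesis dWM : (W :&: M = 0)%MS.
Hypothesis sP : stable gs P.
Hypothesis sM : stable gs M.
Hypothesis sW : stable gs W.

Local Notation Pp := (proj_mx P M).
Local Notation Pm := (proj_mx M P).

Lemma splitX m (X : 'M[K]_(m, d)) : X = X *m Pp + X *m Pm.
Proof.
by rewrite add_proj_mx // (submx_trans (submx1 X) fullPM).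
Qed.

Lemma PpP m (X : 'M[K]_(m, d)) : (X <= P)%MS -> X *m Pp = X.
Proof. exact: proj_mx_id. Qed.
Lemma PpM m (X : 'M[K]_(m, d)) : (X <= M)%MS -> X *m Pp = 0.
Proof. exact: proj_mx_0. Qed.
Lemma PmP m (X : 'M[K]_(m, d)) : (X <= P)%MS -> X *m Pm = 0.
Proof. by apply: proj_mx_0; rewrite capmxC. Qed.

Lemma uniqW m (Z : 'M[K]_(m, d)) : (Z <= W)%MS -> Z *m Pp = 0 -> Z = 0.
Proof.
move=> ZW Z0; apply/eqP; rewrite -submx0 -dWM sub_capmx ZW /=.
by rewrite [Z]splitX Z0 add0r proj_mx_sub.
Qed.

Lemma proj_comm A : A \in gs -> A *m Pp = Pp *m A.
Proof.
move=> hA; have /allP hP := sP; have /allP hM := sM.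
have e : A = Pp *m A + Pm *m A.
  by rewrite -mulmxDl -{1}(mul1mx A) {1}[1%:M]splitX !mul1mx.
rewrite {1}e mulmxDl PpP ?PpM ?addr0 //.
  by apply: submx_trans (hM A hA); apply: submxMr; rewrite -[Pm]mul1mx proj_mx_sub.
by apply: submx_trans (hP A hA); apply: submxMr; rewrite -[Pp]mul1mx proj_mx_sub.
Qed.

Definition fmap := pinvmx (W *m Pp) *m W *m Pm.
Lemma fmapE : fmap = pinvmx (W *m Pp) *m W *m Pm. Proof. by []. Qed.

Lemma liftW m (X : 'M[K]_(m, d)) : (X <= W *m Pp)%MS ->
  (X *m pinvmx (W *m Pp) *m W <= W)%MS /\ X *m pinvmx (W *m Pp) *m W *m Pp = X.
Proof.
move=> XW; split; first exact: submxMl.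
by rewrite -mulmxA mulmxKpV.
Qed.

Lemma fmap_equiv A : A \in gs -> (P <= W *m Pp)%MS ->
  P *m A *m fmap = P *m fmap *m A.
Proof.
move=> hA PW; have /allP hP := sP; have /allP hW := sW.
have PAW : (P *m A <= W *m Pp)%MS := submx_trans (hP A hA) PW.
have [Y1W Y1P] := liftW PW.
have [Y2W Y2P] := liftW PAW.
set Y1 := P *m pinvmx (W *m Pp) *m W in Y1W Y1P.
set Y2 := P *m A *m pinvmx (W *m Pp) *m W in Y2W Y2P.
have e : Y2 = Y1 *m A.
  apply/eqP; rewrite -subr_eq0; apply/eqP; apply: uniqW.
    rewrite addmx_sub // eqmx_opp.
    by apply: submx_trans (hW A hA); apply: submxMr.
  by rewrite mulmxBl Y2P -(mulmxA Y1 A) proj_comm // mulmxA Y1P subrr.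
have L1 : P *m A *m fmap = Y2 *m Pm.
  by rewrite fmapE mulmxA (mulmxA (P *m A)).
have L2 : P *m fmap = Y1 *m Pm.
  by rewrite fmapE mulmxA (mulmxA P).
rewrite L1 L2 e -(mulmxA Y1 A) -(mulmxA Y1 Pm).
have -> : A *m Pm = Pm *m A.
  have e2 : Pm = 1%:M - Pp by rewrite [1%:M in RHS]splitX !mul1mx addrC addKr.
  by rewrite e2 mulmxBr mulmxBl mulmx1 mul1mx proj_comm.
by [].
Qed.

End Graph.

Section GraphIso.
Variables (K : fieldType) (d : nat) (gs : seq 'M[K]_d) (P M W : 'M[K]_d).
Hypothesis dPM : (P :&: M = 0)%MS.
Hypothesis fullPM : (1%:M <= P + M)%MS.
Hypothesis dWM : (W :&: M = 0)%MS.
Hypothesis dWP : (W :&: P = 0)%MS.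
Hypothesis fullWM : (1%:M <= W + M)%MS.
Hypothesis rPM : \rank P = \rank M.
Hypothesis sP : stable gs P.
Hypothesis sM : stable gs M.
Hypothesis sW : stable gs W.

Lemma PW : (P <= W *m proj_mx P M)%MS.
Proof.
have /sub_addsmxP [u e] : (P <= W + M)%MS := submx_trans (submx1 P) fullWM.
rewrite -{1}(PpP dPM (submx_refl P)) {1}e mulmxDl (PpM dPM (submxMl _ _)) addr0.
by rewrite -mulmxA submxMl.
Qed.

Lemma fmap_back : P *m fmap P M W *m fmap M P W = P.
Proof.
have dMP : (M :&: P = 0)%MS by rewrite capmxC.
have fullMP : (1%:M <= M + P)%MS by rewrite addsmxC.
have [Y1W Y1P] := liftW PW.
set Y := P *m pinvmx (W *m proj_mx P M) *m W in Y1W Y1P.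
have L2 : P *m fmap P M W = Y *m proj_mx M P.
  by rewrite fmapE mulmxA (mulmxA P).
have YW : (Y *m proj_mx M P <= W *m proj_mx M P)%MS by apply: submxMr.
have [Y2W Y2P] := liftW YW.
set Y' := Y *m proj_mx M P *m pinvmx (W *m proj_mx M P) *m W in Y2W Y2P.
have e : Y' = Y.
  apply/eqP; rewrite -subr_eq0; apply/eqP; apply: (uniqW dMP fullMP dWP).
    by rewrite addmx_sub // eqmx_opp.
  by rewrite mulmxBl Y2P subrr.
rewrite L2 fmapE mulmxA (mulmxA (Y *m proj_mx M P)).
by rewrite -/Y' e.
Qed.

Lemma graph_iso : mod_iso gs P M.
Proof.
exists (fmap P M W).
have r1 : \rank (P *m fmap P M W) = \rank P.
  apply/eqP; rewrite eqn_leq mxrankM_maxl /=.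
  by rewrite -{1}fmap_back mxrankM_maxl.
have PfM : (P *m fmap P M W <= M)%MS.
  by rewrite fmapE mulmxA proj_mx_sub.
split => //.
- apply/andP; split => //.
  have := mxrank_leqif_sup PfM => -[_ <-].
  by rewrite r1 rPM.
- apply/allP => A hA; apply/eqP.
  have := @fmap_equiv K d gs P M W dPM fullPM dWM sP sM sW A hA PW.
  by [].

Qed.
End GraphIso.

Section Mem.
Variables (K : fieldType) (d : nat) (T : nat -> 'M[K]_d).

Lemma genD_T m i : (1 <= i < m)%N -> T i \in genD m T.
Proof.
move=> hi; rewrite /genD mem_cat; apply/orP; right; apply: map_f.
rewrite mem_iota; lia.
Qed.

Lemma genD_T010 m : (1 < m)%N -> T 0 *m T 1 *m T 0 \in genD m T.
Proof. by move=> hm; rewrite /genD hm mem_cat inE eqxx. Qed.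

Lemma genD_inv m A : A \in genD m T ->
  ((1 < m)%N /\ A = T 0 *m T 1 *m T 0) \/ exists2 i, (1 <= i < m)%N & A = T i.
Proof.
rewrite /genD mem_cat; case/orP.
  by case: ifP => h; rewrite ?inE // => /eqP ->; left.
case/mapP => i; rewrite mem_iota => hi ->; right; exists i => //; lia.
Qed.

Lemma genB_inv m A : A \in genB m T -> exists2 i, (i < m)%N & A = T i.
Proof.
by rewrite /genB; case/mapP => i; rewrite mem_iota => hi ->; exists i => //; lia.
Qed.
End Mem.

Section Main.
Variables (K : fieldType) (q : K) (n d : nat) (T : nat -> 'M[K]_d).
Hypothesis hq : q != 0.
Hypothesis HB : HB_rel n q T.
Hypothesis n2 : (1 < n)%N.

Lemma T00 : T 0 *m T 0 = 1%:M.
Proof. by case: HB => h0 _ _ _ _; apply: h0; lia. Qed.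

Lemma conj_genD A : A \in genD n T -> T 0 *m A *m T 0 \in genD n T.
Proof.
case: HB => _ _ _ _ hc.
case/genD_inv => [[_ ->]|[i hi ->]].
  rewrite !mulmxA T00 mul1mx -mulmxA T00 mulmx1.
  by apply: genD_T; lia.
case: i hi => [|[|i]] hi; first by [].
  by apply: genD_T010.
rewrite (hc 0%N i.+2) //; try lia.
by rewrite -mulmxA T00 mulmx1; apply: genD_T.
Qed.

Lemma stable_conj V : stable (genD n T) V -> stable (genD n T) (V *m T 0).
Proof.
move=> /allP sV; apply/allP => A hA.
have -> : V *m T 0 *m A = V *m (T 0 *m A *m T 0) *m T 0.
  by rewrite !mulmxA -(mulmxA _ (T 0) (T 0)) T00 mulmx1.
by apply: submxMr; apply: sV; apply: conj_genD.
Qed.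

Lemma simple_conj V : simple_sub (genD n T) V -> simple_sub (genD n T) (V *m T 0).
Proof.
have u0 : T 0 \in unitmx by apply: (T_unit hq HB); lia.
move=> [nz sV hV]; split.
- by apply: contra nz => /eqP h; rewrite -(mulmxK u0 V) h mul0mx.
- exact: stable_conj.
move=> X sX XV.
have XT : (X *m T 0 <= V)%MS.
  by rewrite -[V]mulmx1 -T00 mulmxA submxMr.
case: (hV _ (stable_conj sX) XT) => [h|h].
  by left; rewrite -[X]mulmx1 -T00 mulmxA h mul0mx.
by right; rewrite -[X]mulmx1 -T00 mulmxA submxMr.
Qed.

Variables (Dp Dm : 'M[K]_d).
Hypothesis simB : simple_sub (genB n T) 1%:M.
Hypothesis simP : simple_sub (genD n T) Dp.
Hypothesis simM : simple_sub (genD n T) Dm.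
Hypothesis full : (Dp + Dm == 1%:M)%MS.
Hypothesis dir : mxdirect (Dp + Dm).
Hypothesis niso : ~ mod_iso (genD n T) Dp Dm.

Lemma dPM : (Dp :&: Dm = 0)%MS.
Proof. exact/mxdirect_addsP. Qed.

Lemma rank_sum : (\rank Dp + \rank Dm)%N = d.
Proof.
by rewrite -mxrank_disjoint_sum ?dPM // (eqmx_rank full) mxrank1.
Qed.

Lemma capT0 (X Y : 'M[K]_d) : simple_sub (genD n T) X -> simple_sub (genD n T) Y ->
  (X :&: Y = 0)%MS -> (X *m T 0 :&: X = 0)%MS.
Proof.
move=> sX sY dXY.
have [_ sXs _] := sX.
have [_ sW hW] := simple_conj sX.
have := hW _ (stableI sW sXs) (capmxSl _ _); case=> // h.
have XT : (X *m T 0 <= X)%MS := submx_trans h (capmxSr _ _).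
have sB : stable (genB n T) X.
  apply/allP => A /genB_inv [i hi ->].
  case: i hi => [|i] hi //.
  by have /allP := sXs; apply; apply: genD_T; lia.
have [_ _ hB] := simB.
case: (hB X sB (submx1 X)) => [X0|h1].
  by case: sX => nz _ _; rewrite X0 eqxx in nz.
case: sY => nz _ _; case/negP: nz.
by rewrite -submx0 -dXY sub_capmx (submx_trans (submx1 Y) h1) submx_refl.
Qed.

Lemma rank_le (X Y : 'M[K]_d) : simple_sub (genD n T) X -> simple_sub (genD n T) Y ->
  (X :&: Y = 0)%MS -> (\rank X + \rank Y)%N = d -> (\rank X <= \rank Y)%N.
Proof.
move=> sX sY dXY r.
have u0 : T 0 \in unitmx by apply: (T_unit hq HB); lia.
have := mxrank_disjoint_sum (capT0 sX sY dXY).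
rewrite mxrankMfree ?row_free_unit // => e.
have : (\rank X + \rank X <= \rank X + \rank Y)%N by rewrite r -e rank_leq_col.
by rewrite leq_add2l.
Qed.

Lemma rPM : \rank Dp = \rank Dm.
Proof.
have h1 := rank_le simP simM dPM rank_sum.
have d2 : (Dm :&: Dp = 0)%MS by rewrite capmxC dPM.
have r2 : (\rank Dm + \rank Dp)%N = d by rewrite addnC rank_sum.
have h2 := rank_le simM simP d2 r2.
by apply/eqP; rewrite eqn_leq h1 h2.
Qed.
Lemma DpT0 : (Dp *m T 0 <= Dm)%MS.
Proof.
have u0 : T 0 \in unitmx by apply: (T_unit hq HB); lia.
have [nzW sW hW] := simple_conj simP.
have [_ sMs _] := simM.
have [_ sPs _] := simP.
case: (hW _ (stableI sW sMs) (capmxSl _ _)) => [h|h]; last first.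
  exact: submx_trans h (capmxSr _ _).
case: niso.
have dWP := capT0 simP simM dPM.
have rW : \rank (Dp *m T 0) = \rank Dp by rewrite mxrankMfree ?row_free_unit.
have f1 : (1%:M <= Dp + Dm)%MS by case/andP: full.
have f2 : (1%:M <= Dp *m T 0 + Dm)%MS.
  apply: submx_full; rewrite /row_full mxrank_disjoint_sum // rW.
  by rewrite rank_sum.
exact: (graph_iso dPM f1 h dWP f2 rPM sPs sMs sW).
Qed.
Lemma DmT0 : (Dm *m T 0 <= Dp)%MS.
Proof.
have [nzW sW _] := simple_conj simP.
have [_ _ hM] := simM.
case: (hM _ sW DpT0) => [h|h]; first by rewrite h eqxx in nzW.
have := submxMr (T 0) h; rewrite -mulmxA T00 mulmx1; exact.
Qed.

Lemma Lm_swap k : (k < n)%N -> (Dp *m Lm T k <= Dm)%MS /\ (Dm *m Lm T k <= Dp)%MS.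
Proof.
have [_ sPs _] := simP; have [_ sMs _] := simM.
move: sPs sMs => /allP sPs /allP sMs.
elim: k => [|k IH] hk; first by split; [exact: DpT0 | exact: DmT0].
have [IH1 IH2] := IH (ltnW hk).
have hA : T k.+1 \in genD n T by apply: genD_T; lia.
rewrite /= !mulmxA; split.
- apply: submx_trans (sMs _ hA); apply: submxMr.
  apply: submx_trans IH1; apply: submxMr; exact: sPs.
- apply: submx_trans (sPs _ hA); apply: submxMr.
  apply: submx_trans IH2; apply: submxMr; exact: sMs.
Qed.

Lemma LDp : (Dp *m Lm T n.-1 == Dm)%MS.
Proof.
have hn : (n.-1 < n)%N by lia.
have [h1 _] := Lm_swap hn.
apply/andP; split => //.
have := mxrank_leqif_sup h1 => -[_ <-].
by rewrite mxrankMfree ?row_free_unit ?(Lm_unit hq HB) // rPM.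
Qed.

Lemma L_comm : commgs (genD n.-1 T) (Lm T n.-1).
Proof.
have hn : (n.-1 < n)%N by lia.
move=> A /genD_inv [[h1 ->]|[i hi ->]].
  have h0 := Lm_near hq HB hn (j := 0) ltac:(lia).
  have h1' := Lm_near hq HB hn (j := 1) ltac:(lia).
  rewrite -(mulmxA (T 0 *m T 1)) -h0 (mulmxA (T 0 *m T 1)).
  rewrite -(mulmxA (T 0)) -h1' mulmxA -h0.
  by rewrite !mulmxA.
by rewrite (Lm_near hq HB hn) //; lia.
Qed.
End Main.

Theorem theorem2p7 (K : fieldType) (q : K) (n d : nat)
    (T : nat -> 'M[K]_d) (Dp Dm : 'M[K]_d) :
  q != 0 ->
  2%:R * \prod_(1 <= i < n) (1 + q ^+ i) != 0 ->
  HB_rel n q T ->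
  (* D is a simple H(B_n)-module *)
  simple_sub (genB n T) 1%:M ->
  (* D restricted to H(D_n) is D_+ (+) D_-, with D_+, D_- simple, non-isomorphic *)
  simple_sub (genD n T) Dp ->
  simple_sub (genD n T) Dm ->
  (Dp + Dm == 1%:M)%MS -> mxdirect (Dp + Dm) ->
  ~ mod_iso (genD n T) Dp Dm ->
  exists Sp Sm : 'M[K]_d,
    [/\ is_socle (genD n.-1 T) Dp Sp, is_socle (genD n.-1 T) Dm Sm &
        mod_iso (genD n.-1 T) Sp Sm].
Proof.
move=> hq _ HB simB simP simM full dir niso.
case: (leqP n 1) => hn.
  have e : genD n T = [::] by case: n hn {HB simB simP simM niso} => [|[|]].
  by case: niso; rewrite e; apply: iso_nil; rewrite -e.
have [Sp hSp] := socle_exists (genD n.-1 T) Dp.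
have uL : Lm T n.-1 \in unitmx by apply: (Lm_unit hq HB); rewrite prednK //; apply: ltnW.
have cL := L_comm hq HB hn full dir.
exists Sp, (Sp *m Lm T n.-1); split => //.
  apply: socle_eq (LDp hq HB hn simB simP simM full dir niso) _.
  exact: (socleM uL cL hSp).
exact: (isoM Sp uL cL).
Qed.
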